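(* Let $m$ and $k$ be positive integers with $m > k$, and let $A \in \mathcal A_k$. Then the collection of numerical semigroups with multiplicity $m$ and type $(A; k)$ is exactly the collection of sets of the form (a disjoint union) \[ \Lambda = \{0\} \cup (m + A) \cup \bigl(2m + ((A + A)\cap[0, k])\bigr) \cup B \cup [2m + k + 1, \infty) \] where $B$ is any subset of $[m+k+1, 2m+k-1] \setminus (2m + A + A)$.
   Context: A numerical semigroup is a subset $\Lambda\subseteq\mathbb{N}_0$ closed under addition, containing $0$, with finite complement in $\mathbb{N}_0$. Its multiplicity $m$ is its smallest nonzero element and its Frobenius number $f$ is the largest element of $\mathbb{N}_0\setminus\Lambda$. For integers $a\le b$, $[a,b]=\{a,\dots,b\}$, and $[a,\infty)=\{a,a+1,\dots\}$. For $A\subseteq\mathbb{Z}$ and $b\in\mathbb{Z}$, $A+A=\{a_1+a_2:a_1,a_2\in A\}$ and $b+A=\{a+b:a\in A\}$. For a positive integer $k$, $\mathcal A_k = \{A \subseteq [0, k-1] : 0 \in A \text{ and } k \notin A + A\}$. A numerical semigroup $\Lambda$ with multiplicity $m$ and Frobenius number $f$ satisfying $2m<f<3m$ has type $(A;k)$, where $k<m$ is a positive integer and $A\in\mathcal A_k$, if $f=2m+k$ and $\Lambda\cap[m,m+k]=A+m$. *)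

(* Defs.v *)
From Stdlib Require Import Arith Lia.

Definition numerical_semigroup (L : nat -> Prop) : Prop :=
  L 0 /\ (forall x y, L x -> L y -> L (x + y)) /\
  (exists N, forall n, N <= n -> L n).

Definition is_multiplicity (L : nat -> Prop) (m : nat) : Prop :=
  0 < m /\ L m /\ (forall x, 0 < x -> x < m -> ~ L x).

Definition is_frobenius (L : nat -> Prop) (f : nat) : Prop :=
  ~ L f /\ (forall x, f < x -> L x).

Definition in_Ak (k : nat) (A : nat -> Prop) : Prop :=
  A 0 /\ (forall a, A a -> a <= k - 1) /\
  ~ (exists a1 a2, A a1 /\ A a2 /\ a1 + a2 = k).

Definition has_type (L : nat -> Prop) (m k : nat) (A : nat -> Prop) : Prop :=
  exists f, is_frobenius L f /\ 2 * m < f /\ f < 3 * m /\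
  0 < k /\ k < m /\ in_Ak k A /\ f = 2 * m + k /\
  (forall x, m <= x <= m + k -> (L x <-> exists a, A a /\ x = m + a)).

(* Main.v *)
Require Import Defs.
From Stdlib Require Import Arith Lia Classical.

Theorem proposition3p3 (m k : nat) (A : nat -> Prop) :
  0 < k -> k < m -> in_Ak k A ->
  forall L : nat -> Prop,
    (numerical_semigroup L /\ is_multiplicity L m /\ has_type L m k A) <->
    (exists B : nat -> Prop,
        (forall x, B x ->
           m + k + 1 <= x /\ x <= 2 * m + k - 1 /\
           ~ (exists a1 a2, A a1 /\ A a2 /\ x = 2 * m + (a1 + a2))) /\
        (forall x, L x <->
           (x = 0 \/
            (exists a, A a /\ x = m + a) \/
            (exists a1 a2, A a1 /\ A a2 /\ a1 + a2 <= k /\ x = 2 * m + (a1 + a2)) \/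
            B x \/
            2 * m + k + 1 <= x))).
Proof.
  intros Hk Hkm HAk L.
  destruct HAk as [HA0 [HAb HAk]].
  split.
  - intros [[H0 [Hadd HN]] [[Hm0 [Hm Hlt]] [f [[Hf Hgt] [_ [_ [_ [_ [_ [Hf' Hty]]]]]]]]]].
    subst f.
    exists (fun x => L x /\ m+k+1 <= x /\ x <= 2*m+k-1 /\
       ~ exists a1 a2, A a1 /\ A a2 /\ x = 2*m+(a1+a2)).
    split.
    + intros x [Hx [? [? ?]]]; auto.
    + intro x; split.
      * intro Hx. destruct (Nat.eq_dec x 0); [left; auto|]. right.
        destruct (lt_dec x m). { exfalso; apply (Hlt x); auto; lia. }
        destruct (le_dec x (m+k)). { left. apply Hty; auto; lia. }
        destruct (le_dec x (2*m+k-1)).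
        -- destruct (classic (exists a1 a2, A a1 /\ A a2 /\ x = 2*m+(a1+a2))) as [He|He].
           ++ right; left. destruct He as [a1 [a2 [H1 [H2 He]]]].
              exists a1, a2; repeat split; auto; lia.
           ++ right; right; left. repeat split; auto; lia.
        -- destruct (Nat.eq_dec x (2*m+k)). { subst; contradiction. }
           right; right; right; lia.
      * intros [H|[H|[H|[H|H]]]].
        -- subst; auto.
        -- destruct H as [a [Ha ->]]. apply Hty.
           ++ specialize (HAb a Ha); lia.
           ++ exists a; auto.
        -- destruct H as [a1 [a2 [H1 [H2 [_ ->]]]]].
           replace (2*m+(a1+a2)) with ((m+a1)+(m+a2)) by lia.
           pose proof (HAb a1 H1); pose proof (HAb a2 H2).
           apply Hadd; apply Hty; try lia; eauto.
        -- destruct H; auto.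
        -- apply Hgt; lia.
  - intros [B [HB HL]].
    assert (Hbig : forall x, L x -> x = 0 \/ m <= x).
    { intros x Hx. apply HL in Hx.
      destruct Hx as [H|[H|[H|[H|H]]]]; auto.
      - destruct H as [a [_ ->]]; lia.
      - destruct H as [a1 [a2 [_ [_ [_ ->]]]]]; lia.
      - apply HB in H; lia.
      - lia. }
    assert (Hsmall : forall x, L x -> m <= x <= m + k -> exists a, A a /\ x = m + a).
    { intros x Hx Hr. apply HL in Hx.
      destruct Hx as [H|[H|[H|[H|H]]]]; auto.
      - lia.
      - destruct H as [a1 [a2 [_ [_ [_ ->]]]]]; lia.
      - apply HB in H; lia.
      - lia. }
    split; [split; [|split] | split].
    + apply HL; auto.
    + intros x y Hx Hy.
      destruct (Hbig x Hx) as [->|Hx1]; [simpl; auto|].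
      destruct (Hbig y Hy) as [->|Hy1]; [rewrite Nat.add_0_r; auto|].
      destruct (le_dec (x+y) (2*m+k)).
      * destruct (Hsmall x Hx) as [a1 [H1 ->]]; [lia|].
        destruct (Hsmall y Hy) as [a2 [H2 ->]]; [lia|].
        apply HL. right; right; left. exists a1, a2; repeat split; auto; lia.
      * apply HL; right; right; right; right; lia.
    + exists (2*m+k+1). intros n Hn. apply HL; right; right; right; right; lia.
    + split; [lia|split].
      * apply HL; right; left; exists 0; split; auto; lia.
      * intros x Hx1 Hx2 Hx. destruct (Hbig x Hx); lia.
    + exists (2*m+k). split; [split|].
      * intro H. apply HL in H.
        destruct H as [H|[H|[H|[H|H]]]].
        -- lia.
        -- destruct H as [a [Ha He]]. specialize (HAb a Ha); lia.
        -- destruct H as [a1 [a2 [H1 [H2 [_ He]]]]]. apply HAk.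
           exists a1, a2; repeat split; auto; lia.
        -- apply HB in H; lia.
        -- lia.
      * intros x Hx. apply HL; right; right; right; right; lia.
      * repeat split; try lia; auto.
        intros [a [Ha ->]]. apply HL; right; left; eauto.
Qed.
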